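(* Let $k=k(n)$ be integers with $1\le k=O(\log n)$ and let $\varphi(n)=o(1/k(n))$. For every $\eta>0$ there is $n_0$ such that for all $n\ge n_0$, every integer $r>(1/2-\varphi(n))n$, every $x\in Q$ and every $X\subseteq Q$ with $\mu(X)\le\mu(Q_r)$, $$\Pr(T(x)\in X)<(1+\eta)\mu(Q_r).$$
   Context: $Q=\{0,1\}^n$ with uniform probability measure $\mu$; for $y\in Q$, $|y|=\sum_i y_i$, and $Q_r=\{y\in Q: |y|\le r\}$. For $x\in Q$, $T(x)$ is the random element of $Q$ obtained by choosing $K$ uniformly from the $k$-subsets of $[n]$, keeping $x_i$ for $i\in K$, and replacing each $x_i$ with $i\notin K$ by an independent uniform bit. *)

(* Defs.v *)
From mathcomp Require Import all_boot.
From Stdlib Require Import Reals.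

Set Implicit Arguments.
Unset Strict Implicit.
Unset Printing Implicit Defensive.

Definition cube (n : nat) := {ffun 'I_n -> bool}.

Definition weight (n : nat) (y : cube n) : nat := #|[set i : 'I_n | y i]|.

Definition Qball (n r : nat) : {set cube n} := [set y : cube n | weight y <= r].

(* For a fixed k-set K, the number of outcomes y of the resampling (y agrees
   with x on K, free elsewhere; 2^(n-k) equally likely outcomes) landing in X.
   Summed over all k-subsets K of [n]. *)
Definition hitCount (n k : nat) (x : cube n) (X : {set cube n}) : nat :=
  \sum_(K : {set 'I_n} | #|K| == k)
     #|[set y in X | [forall i in K, y i == x i]]|.

Local Open Scope R_scope.

Definition mu (n : nat) (A : {set cube n}) : R := INR #|A| / 2 ^ n.

(* Pr(T(x) in X): K uniform among the C(n,k) k-subsets, the n-k other bits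
   independent uniform. *)
Definition PrT (n k : nat) (x : cube n) (X : {set cube n}) : R :=
  INR (hitCount k x X) / (INR 'C(n, k) * 2 ^ (n - k)).

(* Main.v *)
Require Import Defs.
From mathcomp Require Import all_boot.
From Stdlib Require Import Reals.
From mathcomp Require Import zify.
From Stdlib Require Import Lra.
Import ssrnat.
Local Open Scope R_scope.
Local Open Scope nat_scope.

Definition F (m r : nat) : nat := \sum_(j < r.+1) 'C(m, j).

Lemma card_small (T : finType) (B : {set T}) r :
  #|[set A : {set T} | A \subset B & #|A| <= r]| = F #|B| r.
Proof.
elim: r => [|r IH].
  rewrite /F big_ord_recr big_ord0 /= -cards_draws.
  by apply: eq_card => A; rewrite !inE leqn0.
have -> : [set A : {set T} | A \subset B & #|A| <= r.+1] =
   [set A : {set T} | A \subset B & #|A| <= r] :|: [set A : {set T} | A \subset B & #|A| == r.+1].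
  apply/setP => A; rewrite !inE leq_eqVlt ltnS.
  by case: (A \subset B) => //=; rewrite orbC.
rewrite cardsU IH cards_draws /F [in RHS]big_ord_recr /=.
have -> : [set A : {set T} | A \subset B & #|A| <= r] :&: [set A : {set T} | A \subset B & #|A| == r.+1] = set0.
  apply/setP => A; rewrite !inE.
  case: (A \subset B) => //=; case: (#|A| =P r.+1) => [->|]; rewrite ?andbF ?andbT //.
  by rewrite ltnn.
by rewrite cards0 subn0.
Qed.

Section Cube.
Variable n : nat.

Definition Dx (x y : cube n) : {set 'I_n} := [set i | y i != x i].
Definition ex (x : cube n) (S : {set 'I_n}) : cube n := [ffun i => (i \in S) (+) x i].

Lemma Dx_ex x S : Dx x (ex x S) = S.
Proof. by apply/setP => i; rewrite !inE ffunE; case: (i \in S); case: (x i). Qed.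

Lemma ex_Dx x y : ex x (Dx x y) = y.
Proof. by apply/ffunP => i; rewrite !ffunE !inE; case: (y i); case: (x i). Qed.

Lemma Dx_inj x : injective (Dx x).
Proof. exact: can_inj (ex_Dx x). Qed.

Lemma card_Dx x (P : pred {set 'I_n}) :
  #|[set y : cube n | P (Dx x y)]| = #|[set S : {set 'I_n} | P S]|.
Proof.
rewrite -(card_imset _ (Dx_inj x)); apply: eq_card => S.
rewrite [in RHS]inE; apply/imsetP/idP => [[y]|PS].
  by rewrite inE => Py ->.
by exists (ex x S); rewrite ?inE Dx_ex.
Qed.

Lemma card_Qball r : #|Qball n r| = F n r.
Proof.
have -> : Qball n r = [set y : cube n | #|Dx [ffun => false] y| <= r].
  apply/setP => y; rewrite !inE /weight.
  suff -> : [set i | y i] = Dx [ffun => false] y by [].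
  by apply/setP => i; rewrite !inE ffunE; case: (y i).
rewrite (card_Dx _ (fun S => #|S| <= r)) -[n in F n r]card_ord -cardsT -card_small.
by apply: eq_card => S; rewrite !inE subsetT.
Qed.

Lemma card_ball x r : #|[set y : cube n | #|Dx x y| <= r]| = F n r.
Proof.
rewrite (card_Dx _ (fun S => #|S| <= r)) -[n in F n r]card_ord -cardsT -card_small.
by apply: eq_card => S; rewrite !inE subsetT.
Qed.

Lemma rearr (T : finType) (X B : {set T}) (f : T -> nat) c :
  #|X| <= #|B| -> (forall y, y \in B -> c <= f y) -> (forall y, y \notin B -> f y <= c) ->
  \sum_(y in X) f y <= \sum_(y in B) f y.
Proof.
move=> hXB hB hnB.
rewrite (big_setID B) [in X in _ <= X](big_setID X) /= setIC leq_add2l.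
apply: (@leq_trans (#|X :\: B| * c)).
  rewrite -sum_nat_const; apply: leq_sum => y; rewrite inE => /andP[hy _]; exact: hnB.
apply: (@leq_trans (#|B :\: X| * c)).
  rewrite leq_mul2r; apply/orP; right.
  by move: hXB; rewrite -(cardsID B X) -(cardsID X B) setIC; lia.
rewrite -sum_nat_const; apply: leq_sum => y; rewrite inE => /andP[_ hy]; exact: hB.
Qed.

Lemma agree_sub (x : cube n) (K : {set 'I_n}) (y : cube n) :
  [forall i in K, y i == x i] = (K \subset ~: Dx x y).
Proof.
apply/forall_inP/subsetP => H i Hi.
  by rewrite !inE negbK; apply: H.
by move: (H i Hi); rewrite !inE negbK.
Qed.

Lemma sumK_sub k (y x : cube n) :
  \sum_(K : {set 'I_n} | #|K| == k) ((K \subset ~: Dx x y) : nat) = 'C(n - #|Dx x y|, k).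
Proof.
rewrite -big_mkcondr /= sum1_card.
have -> : n - #|Dx x y| = #|~: Dx x y| by have := cardsC (Dx x y); rewrite card_ord; lia.
rewrite -cards_draws; apply: eq_card => K; rewrite !inE andbC //.
Qed.

Lemma card_sep (T : finType) (X : {set T}) (P : pred T) :
  #|[set y in X | P y]| = \sum_(y in X) (P y : nat).
Proof.
rewrite -sum1_card big_mkcond /= [RHS]big_mkcond; apply: eq_bigr => y _.
by rewrite inE; case: (y \in X); case: (P y).
Qed.

Lemma hit_le k x (X : {set cube n}) r :
  #|X| <= #|Qball n r| -> hitCount k x X <= 'C(n, k) * F (n - k) r.
Proof.
move=> hX.
set B := [set y : cube n | #|Dx x y| <= r].
have e1 : hitCount k x X = \sum_(y in X) 'C(n - #|Dx x y|, k).
  rewrite /hitCount.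
  under [LHS]eq_bigr => K _ do rewrite (@card_sep _ X (fun y => [forall i in K, y i == x i])).
  rewrite exchange_big /=; apply: eq_bigr => y Hy.
  rewrite -sumK_sub; apply: eq_bigr => K _.
  by rewrite agree_sub.
rewrite e1.
apply: (@leq_trans (\sum_(y in B) 'C(n - #|Dx x y|, k))).
  apply: (@rearr _ X B _ ('C(n - r, k))).
  - by rewrite card_ball -card_Qball.
  - by move=> y; rewrite inE => hy; apply: leq_bin2l; lia.
  - by move=> y; rewrite inE => hy; apply: leq_bin2l; lia.
under eq_bigr => y _ do rewrite -sumK_sub.
rewrite exchange_big /=.
apply: (@leq_trans (\sum_(K : {set 'I_n} | #|K| == k) F (n - k) r)); last first.
  by rewrite sum_nat_cond_const card_draws card_ord.
apply: leq_sum => K /eqP hK.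
rewrite -big_mkcondr /= sum1_card.
have -> : n - k = #|~: K| by have := cardsC K; rewrite card_ord hK; lia.
rewrite -card_small -(card_Dx x (fun S => (S \subset ~: K) && (#|S| <= r))).
apply: eq_leq; apply: eq_card => y; rewrite !inE subsetC andbC; rewrite unfold_in /= inE andbC. done.
Qed.
End Cube.

Lemma F_S m r : F m r.+1 = F m r + 'C(m, r.+1).
Proof. by rewrite /F big_ord_recr. Qed.

Lemma F_SS m r : F m.+1 r.+1 = F m r.+1 + F m r.
Proof.
rewrite /F big_ord_recl [X in _ = X + _]big_ord_recl /= !bin0.
under eq_bigr => i _ do rewrite /bump /= add1n binS.
rewrite big_split /= -addnA; congr (_ + _).
Qed.

Lemma F_mono m r : F m r <= F m r.+1.
Proof. by rewrite F_S leq_addr. Qed.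

Lemma F_shift m k r : k <= r -> 2 ^ k * F m (r - k) <= F (m + k) r.
Proof.
elim: k r => [|k IH] r hk; first by rewrite expn0 mul1n subn0 addn0.
case: r hk => [//|r] hk.
rewrite addnS F_SS expnS -mulnA subSS.
apply: (@leq_trans (2 * F (m + k) r)); first by rewrite leq_mul2l IH.
rewrite mul2n -addnn leq_add2r; exact: F_mono.
Qed.

Lemma ratio m a j : a < j -> 'C(m, j) * a.+1 <= 'C(m, j.-1) * (m - a).
Proof.
case: j => [//|i] /= hi.
apply: (@leq_trans ('C(m, i.+1) * i.+1)); first by rewrite leq_mul2l hi orbT.
rewrite mulnC mul_bin_left mulnC leq_mul2l; apply/orP; right; lia.
Qed.

Definition w (m k s : nat) : nat := \sum_(i < k) 'C(m, s - i).

Lemma F_w m k s : k <= s -> F m s = w m k s + F m (s - k).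
Proof.
elim: k => [|k IH] hk; first by rewrite /w big_ord0 subn0.
rewrite IH ?(ltnW hk) // /w big_ord_recr /= -addnA; congr (_ + _).
have -> : s - k = (s - k.+1).+1 by lia.
by rewrite F_S addnC.
Qed.

Lemma w_step m k a s : a + k <= s -> w m k s * a.+1 <= w m k s.-1 * (m - a).
Proof.
move=> h; rewrite /w !big_distrl /=; apply: leq_sum => i _.
have -> : s.-1 - i = (s - i).-1 by lia.
apply: ratio; have := ltn_ord i; lia.
Qed.

Lemma w_iter m k a s d : a + k + d <= s.+1 ->
  w m k s * a.+1 ^ d <= w m k (s - d) * (m - a) ^ d.
Proof.
elim: d => [|d IH] h; first by rewrite !expn0 !muln1 subn0.
have h1 := IH ltac:(lia).
have h2 := @w_step m k a (s - d) ltac:(lia).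
have -> : s - d.+1 = (s - d).-1 by lia.
rewrite !expnS.
set A := a.+1 ^ d in h1 *; set B := (m - a) ^ d in h1 *.
set u := w m k s in h1 *; set v := w m k (s - d) in h1 h2 *.
set v' := w m k (s - d).-1 in h2 *.
apply: (@leq_trans (v * B * a.+1)).
  have := leq_mul h1 (leqnn a.+1). nia.
have := leq_mul h2 (leqnn B). nia.
Qed.

Lemma sum_w m k s T : T * k <= s -> \sum_(t < T) w m k (s - t * k) <= F m s.
Proof.
elim: T s => [|T IH] s h; first by rewrite big_ord0.
rewrite big_ord_recl /= mul0n subn0 (@F_w m k s) ?leq_add2l; last by lia.
apply: leq_trans (IH (s - k) ltac:(lia)).
apply: eq_leq; apply: eq_bigr => t _; congr (w m k _); rewrite /bump /=; lia.
Qed.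

Lemma exp_mono a b e : a <= b -> a ^ e <= b ^ e.
Proof. by move=> h; elim: e => [|e IH]; rewrite ?expnS // leq_mul. Qed.

Lemma partC m k r a T : 2 * a + 1 <= m -> a + (T + 2) * k <= r ->
  T * w m k r * a.+1 ^ ((T + 1) * k) <= F m (r - k) * (m - a) ^ ((T + 1) * k).
Proof.
move=> ham har.
set N := (T + 1) * k.
have hAB : a.+1 <= m - a by lia.
have key : forall t, t < T -> w m k r * a.+1 ^ N <= w m k (r - k - t * k) * (m - a) ^ N.
  move=> t ht.
  have hd : (t + 1) * k <= N by rewrite /N leq_mul2r; apply/orP; right; lia.
  have -> : N = (t + 1) * k + (N - (t + 1) * k) by lia.
  rewrite !expnD !mulnA.
  have h1 := @w_iter m k a r ((t + 1) * k) ltac:(nia).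
  have -> : r - k - t * k = r - (t + 1) * k by lia.
  apply: leq_mul; first exact: h1.
  exact: exp_mono.
apply: (leq_trans _ (leq_mul (sum_w m k (r - k) T ltac:(nia)) (leqnn ((m - a) ^ N)))).
rewrite big_distrl /= -mulnA.
have -> : T * (w m k r * a.+1 ^ N) = \sum_(t < T) (w m k r * a.+1 ^ N).
  by rewrite big_const_ord iter_addn_0 mulnC.
by apply: leq_sum => t _; apply: key.
Qed.

Lemma bern A e N : (A + e) ^ N.+1 <= (A + e) * A ^ N + N * e * (A + e) ^ N.
Proof.
elim: N => [|N IH]; first by rewrite !expn0 !muln1 mul0n addn0.
set B := A + e in IH *.
have hAB : A <= B by rewrite /B leq_addr.
rewrite expnS.
apply: (@leq_trans (B * (B * A ^ N + N * e * B ^ N))); first by rewrite leq_mul2l IH orbT.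
rewrite !expnS.
have h1 : B * (B * A ^ N) = B * A * A ^ N + e * B * A ^ N by rewrite /B; nia.
have h2 : e * B * A ^ N <= e * B * B ^ N by rewrite leq_mul2l exp_mono ?orbT.
nia.
Qed.

Lemma bern2 A e N : 2 * N * e <= A -> (A + e) ^ N <= 2 * A ^ N.
Proof.
move=> h.
have h1 := bern A e N.
set B := A + e in h1 *.
have hB : A <= B by rewrite /B leq_addr.
rewrite expnS in h1.
case: (posnP B) => [B0|Bpos].
  by rewrite B0; case: N h1 h => [|N]; rewrite ?expn0 ?exp0n //; lia.
have : B * B ^ N <= B * (2 * A ^ N).
  have h3 : N * e * B ^ N * 2 <= B * B ^ N by nia.
  nia.
by rewrite leq_mul2l gtn_eqF.
Qed.


Lemma nat_main m k r a T : 2 * a + 1 <= m -> a + (T + 2) * k <= r ->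
  2 * ((T + 1) * k) * (m - a - a.+1) <= a.+1 ->
  T * w m k r <= 2 * F m (r - k).
Proof.
move=> h1 h2 h3.
have hC := @partC m k r a T h1 h2.
have hB := @bern2 a.+1 (m - a - a.+1) ((T + 1) * k) h3.
have e1 : a.+1 + (m - a - a.+1) = m - a by lia.
rewrite e1 in hB.
set N := (T + 1) * k in hC hB.
have hpos : 0 < a.+1 ^ N by rewrite expn_gt0.
have : T * w m k r * a.+1 ^ N <= 2 * F m (r - k) * a.+1 ^ N.
  apply: (leq_trans hC).
  have := leq_mul (leqnn (F m (r - k))) hB. nia.
by rewrite leq_mul2r gtn_eqF.
Qed.

Local Open Scope R_scope.
Lemma ln_le_id y : 0 < y -> ln y <= y.
Proof.
move=> hy; have := exp_ineq1_le (ln y); rewrite exp_ln //; lra.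
Qed.

Lemma ln_quart y : 0 < y -> ln y <= 4 * sqrt (sqrt y).
Proof.
move=> hy.
have hq : 0 < sqrt (sqrt y) by apply: sqrt_lt_R0; apply: sqrt_lt_R0.
set q := sqrt (sqrt y) in hq *.
have e : y = (q * q) * (q * q).
  rewrite /q sqrt_sqrt; last by apply: sqrt_pos.
  by rewrite sqrt_sqrt //; lra.
rewrite e !ln_mult; try nra.
have := ln_le_id _ hq; lra.
Qed.

Lemma asym (k : nat -> nat) (phi : nat -> R)
  (hk1 : forall n : nat, (1 <= k n)%nat)
  (hklog : exists (C : R) (N : nat), forall n : nat, (N <= n)%nat ->
             INR (k n) <= C * ln (INR n))
  (hphi : Un_cv (fun n => phi n * INR (k n)) 0) eps : 0 < eps ->
  exists N0 : nat, forall n : nat, (N0 <= n)%nat ->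
    INR (k n) * INR (k n) <= eps * INR n /\ Rabs (phi n) * INR (k n) <= eps /\ 1 <= eps * INR n.
Proof.
move=> he.
case: hklog => C [N1 hN1].
case: (hphi eps he) => N2 hN2.
set M := (16 * C * C / eps) ^ 2 + 1 / eps + 1.
case: (INR_unbounded M) => N3 hN3.
exists (N1 + N2 + N3)%nat; move=> n hn.
have hn1 : (N1 <= n)%nat by apply: (leq_trans _ hn); rewrite -addnA leq_addr.
have hn2 : (N2 <= n)%coq_nat.
  apply/leP; apply: (leq_trans _ hn); by rewrite addnAC leq_addl.
have hn3 : INR N3 <= INR n.
  apply: le_INR; apply/leP; apply: (leq_trans _ hn); by rewrite leq_addl.
have hkn := hN1 n hn1.
have hk : 1 <= INR (k n) by apply: (le_INR 1); apply/leP; apply: hk1.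
have hM : M < INR n by lra.
have hM0 : 0 <= (16 * C * C / eps) ^ 2 by apply: pow2_ge_0.
have h1e : 0 < 1 / eps by apply: Rdiv_lt_0_compat; lra.
have hMpos : 0 < M by rewrite /M; lra.
have hnpos : 0 < INR n by lra.
split; [|split].
- have hl := ln_quart _ hnpos.
  have hl0 : 0 <= ln (INR n).
    have hM1 : 1 < M by rewrite /M; lra.
    have h1n : 1 <= INR n by lra.
    case: (Rle_lt_or_eq_dec 1 (INR n) h1n) => h.
    + have := ln_increasing 1 _ ltac:(lra) h; rewrite ln_1; lra.
    + rewrite -h ln_1; lra.
  have hq0 : 0 <= sqrt (sqrt (INR n)) by apply: sqrt_pos.
  have hq2 : sqrt (sqrt (INR n)) * sqrt (sqrt (INR n)) = sqrt (INR n) by apply: sqrt_sqrt; apply: sqrt_pos.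
  have hs2 : sqrt (INR n) * sqrt (INR n) = INR n by apply: sqrt_sqrt; lra.
  have hs0 : 0 <= sqrt (INR n) by apply: sqrt_pos.
  have hkC : INR (k n) <= Rabs C * (4 * sqrt (sqrt (INR n))).
    apply: (Rle_trans _ _ _ hkn).
    have := Rle_abs C. have := Rabs_pos C. nra.
  have hk2 : INR (k n) * INR (k n) <= 16 * (C * C) * sqrt (INR n).
    have : INR (k n) * INR (k n) <= (Rabs C * (4 * sqrt (sqrt (INR n)))) * (Rabs C * (4 * sqrt (sqrt (INR n)))).
      apply: Rmult_le_compat; lra.
    have hCC : Rabs C * Rabs C = C * C by rewrite -Rabs_mult Rabs_right; nra.
    nra.
  have hsq : 16 * C * C / eps <= sqrt (INR n).
    have ha : 0 <= 16 * C * C / eps by apply: Rmult_le_pos; [nra| lra].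
    have hM' : (16 * C * C / eps) ^ 2 < INR n by move: hM; rewrite /M; lra.
    set a := 16 * C * C / eps in ha hM' *.
    have : a * a < sqrt (INR n) * sqrt (INR n) by rewrite hs2; simpl in hM'; nra.
    nra.
  have : 16 * C * C <= eps * sqrt (INR n).
    have := Rmult_le_compat_l eps _ _ (Rlt_le _ _ he) hsq.
    by rewrite /Rdiv Rmult_comm Rmult_assoc Rinv_l ?Rmult_1_r; lra.
  nra.
- have := hN2 n hn2; rewrite /Rdist Rminus_0_r Rabs_mult (Rabs_right (INR (k n))); lra.
- have : 1 / eps < INR n by move: hM; rewrite /M; lra.
  move=> h; have := Rmult_lt_compat_l eps _ _ he h.
  rewrite /Rdiv Rmult_1_l Rinv_r; lra.
Qed.

Lemma INR_addn (a b : nat) : INR (a + b)%nat = INR a + INR b. Proof. exact: plus_INR. Qed.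
Lemma INR_muln (a b : nat) : INR (a * b)%nat = INR a * INR b. Proof. exact: mult_INR. Qed.
Lemma INR_expn2 (a : nat) : INR (2 ^ a)%nat = 2 ^ a. 
Proof. elim: a => [|a IH]; first by []. rewrite expnS INR_muln IH /=. by []. Qed.
Lemma INR_leq (a b : nat) : (a <= b)%nat -> INR a <= INR b. Proof. by move/leP; apply: le_INR. Qed.
Lemma leq_INR (a b : nat) : INR a <= INR b -> (a <= b)%nat. Proof. by move=> h; apply/leP; apply: INR_le. Qed.

Lemma F_pos m r : (0 < F m r)%nat.
Proof. by rewrite /F big_ord_recl bin0. Qed.

Lemma INR2 : INR 2 = 2. Proof. simpl; lra. Qed.

Local Open Scope R_scope.

Theorem claimE (k : nat -> nat) (phi : nat -> R)
  (hk1 : forall n : nat, (1 <= k n)%nat)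
  (hklog : exists (C : R) (N : nat), forall n : nat, (N <= n)%nat ->
             INR (k n) <= C * ln (INR n))
  (hphi : Un_cv (fun n => phi n * INR (k n)) 0) :
  forall eta : R, 0 < eta ->
  exists n0 : nat, forall n : nat, (n0 <= n)%nat ->
    forall (r : nat), (1 / 2 - phi n) * INR n < INR r ->
    forall (x : cube n) (X : {set cube n}),
      mu X <= mu (Qball n r) ->
      PrT (k n) x X < (1 + eta) * mu (Qball n r).
Proof.
move=> eta heta.
have h4e : 0 < 4 / eta by apply: Rdiv_lt_0_compat; lra.
have [T hT] := INR_unbounded (4 / eta).
set c := INR T + 3.
have hT0 : 0 <= INR T by apply: pos_INR.
have hc3 : 3 <= c by rewrite /c; lra.
set eps := / (10 * (c * c)).
have h10 : 0 < 10 * (c * c) by nra.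
have heps : 0 < eps by apply: Rinv_0_lt_compat.
have hepsc : eps * (10 * (c * c)) = 1 by rewrite /eps Rinv_l; lra.
have [N0 hN0] := asym k phi hk1 hklog hphi eps heps.
exists N0; move=> n hn r hr x X hmu.
have [hkk [hphk hne]] := hN0 n hn.
have hK1 : 1 <= INR (k n) by apply: (le_INR 1); apply/leP; apply: hk1.
set K := k n in hkk hphk hne hK1 *.
set kR := INR K in hkk hphk hne hK1 *.
set d := eps * INR n in hkk hne *.
have hnd : INR n = 10 * (c * c) * d.
  by rewrite /d -[INR n in LHS]Rmult_1_r -hepsc; ring.
have hKd : kR <= d by nra.
have hC2 : 90 <= 10 * (c * c) by nra.
set C2 := 10 * (c * c) in hnd hC2.
set P := Rabs (phi n) * INR n.
have hn0 : 0 <= INR n by apply: pos_INR.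
have hph0 : 0 <= Rabs (phi n) by apply: Rabs_pos.
have hph : Rabs (phi n) <= eps by nra.
have hP : P <= d by have := Rmult_le_compat_r (INR n) _ _ hn0 hph; rewrite /P /d; lra.
have hPK : P * kR <= d.
  have := Rmult_le_compat_r (INR n) _ _ hn0 hphk; rewrite /P /d; nra.
have hr' : INR n / 2 - P < INR r.
  have := Rle_abs (phi n); rewrite /P; nra.
have hKn : (K < n)%nat.
  have hdn : d < INR n by rewrite hnd; nra.
  apply/ltP; apply: INR_lt; rewrite -/kR; lra.
set m := (n - K)%nat.
have hmK : (m + K)%nat = n by rewrite /m; lia.
have hTK : ((T + 2) * K <= r)%nat.
  apply: leq_INR; rewrite INR_muln INR_addn INR2 -/kR.
  have h1 : (INR T + 2) * kR <= (c - 1) * d by rewrite /c; nra.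
  have hcC : c <= C2 / 2 by rewrite /C2; nra.
  have h2 : c * d <= C2 * d / 2.
    have := Rmult_le_compat_r d _ _ (ltac:(lra)) hcC; lra.
  lra.
set a := minn (r - (T + 2) * K) ((m - 1) %/ 2).
have h3 : (2 * a + 1 <= m)%nat.
  rewrite /a; set Q := ((T + 2) * K)%nat in hTK *; lia.
have h2 : (a + (T + 2) * K <= r)%nat.
  rewrite /a; set Q := ((T + 2) * K)%nat in hTK *; lia.
have hnR : INR m + kR = INR n by rewrite -hmK INR_addn.
have h4 : (2 * ((T + 1) * K) * (m - a - a.+1) <= a.+1)%nat.
  case E: (m - a - a.+1)%nat => [|e]; first by rewrite muln0.
  have hE : (e.+1 + 2 * a + 1)%nat = m by lia.
  have hER : INR e + 1 + 2 * INR a + 1 = INR m.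
    rewrite -hE !INR_addn S_INR; change (INR 0) with 0; change (INR 1) with 1; lra.
  apply: leq_INR; rewrite !INR_muln !INR_addn INR2 !S_INR -/kR.
  change (INR 0) with 0.
  have hTc : INR T + (0 + 1) = c - 2 by rewrite /c; lra.
  rewrite hTc.
  have hd0 : 0 <= d by lra.
  have hkR0 : 0 <= kR by lra.
  have [ha|ha] : a = (r - (T + 2) * K)%nat \/ a = ((m - 1) %/ 2)%nat.
  - rewrite /a; case: (leqP (r - (T + 2) * K) ((m - 1) %/ 2)) => h.
    + by left; lia.
    + by right; lia.
  - have har : (a + (T + 2) * K)%nat = r by rewrite ha; lia.
    have harR : INR a + (c - 1) * kR = INR r.
      by rewrite -har INR_addn INR_muln INR_addn INR2 -/kR /c; ring.
    have heR : INR e + 1 <= 2 * P + (2 * c - 3) * kR.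
      have := hr'; rewrite hnd; rewrite hnd in hnR; nra.
    have hL : 2 * ((c - 2) * kR) * (INR e + 1) <= 2 * ((c - 2) * kR) * (2 * P + (2 * c - 3) * kR).
      apply: Rmult_le_compat_l; nra.
    have hL2 : 2 * ((c - 2) * kR) * (2 * P + (2 * c - 3) * kR) <= (c - 2) * (4 * c - 2) * d.
      have hq1 : 4 * (c - 2) * (P * kR) <= 4 * (c - 2) * d by apply: Rmult_le_compat_l; nra.
      have hq2 : 2 * (c - 2) * (2 * c - 3) * (kR * kR) <= 2 * (c - 2) * (2 * c - 3) * d.
        by apply: Rmult_le_compat_l; nra.
      nra.
    have hR : (5 * (c * c) - c) * d <= INR a + 1.
      have : C2 * d / 2 - d - (c - 1) * d < INR a + 1.
        rewrite -hnd; nra.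
      rewrite /C2; nra.
    have : (c - 2) * (4 * c - 2) * d <= (5 * (c * c) - c) * d.
      apply: Rmult_le_compat_r => //; nra.
    lra.
  - have hm2 : (m <= 2 * a + 2)%nat by rewrite ha; lia.
    have he0 : e = 0%nat by lia.
    have hm2R : INR m <= 2 * INR a + 2.
      have := INR_leq _ _ hm2; rewrite !INR_addn INR2; change (INR 0) with 0; lra.
    rewrite he0 /=.
    have : 2 * ((c - 2) * kR) <= 2 * (c - 2) * d by nra.
    have : 2 * (c - 2) * d <= (C2 * d - d) / 2 - 1.
      have hcd : 3 * d <= c * d by nra.
      have hccd : 3 * (c * d) <= c * (c * d) by nra.
      rewrite /C2; nra.
    rewrite hnd in hnR; lra.
have hKr : (K <= r)%nat.
  apply: (leq_trans _ hTK); rewrite leq_pmull //; lia.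
have hmain := @nat_main m K r a T h3 h2 h4.
have hFw := @F_w m K r hKr.
have hsh := @F_shift m K r hKr.
rewrite hmK in hsh.
have hp : 0 < 2 ^ n by apply: pow_lt; lra.
have hX : (#|X| <= #|Qball n r|)%nat.
  apply: leq_INR; move: hmu; rewrite /mu /Rdiv => h.
  apply: (Rmult_le_reg_r (/ 2 ^ n)) => //; by apply: Rinv_0_lt_compat.
have hhit := hit_le n K x X r hX.
have hCpos : (0 < 'C(n, K))%nat by rewrite bin_gt0 ltnW.
rewrite /PrT /mu card_Qball -/m.
have hmainR := INR_leq _ _ hmain.
rewrite !INR_muln INR2 in hmainR.
have hFwR := f_equal INR hFw; rewrite INR_addn in hFwR.
have hshR := INR_leq _ _ hsh; rewrite INR_muln INR_expn2 in hshR.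
have hhitR := INR_leq _ _ hhit; rewrite INR_muln in hhitR.
have hCR : 0 < INR 'C(n, K) by apply: (lt_INR 0); apply/ltP.
have hFk : 1 <= INR (F m (r - K)) by apply: (le_INR 1); apply/leP; apply: F_pos.
have hFn : 1 <= INR (F n r) by apply: (le_INR 1); apply/leP; apply: F_pos.
have hpn : 2 ^ n = 2 ^ m * 2 ^ K by rewrite -hmK pow_add.
rewrite hpn.
have hpm : 0 < 2 ^ m by apply: pow_lt; lra.
have hpK : 0 < 2 ^ K by apply: pow_lt; lra.
set H := INR (hitCount K x X) in hhitR *.
set Cn := INR 'C(n, K) in hhitR hCR *.
set Fr := INR (F m r) in hhitR hFwR *.
set Fk := INR (F m (r - K)) in hmainR hFwR hshR hFk *.
set Wr := INR (w m K r) in hmainR hFwR.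
set Fn := INR (F n r) in hshR hFn *.
set pm := 2 ^ m in hpm *.
set pK := 2 ^ K in hpK hshR *.
have hTpos : 0 < INR T by lra.
have hTe : 2 < eta / 2 * INR T.
  have := Rmult_lt_compat_l eta _ _ heta hT.
  rewrite /Rdiv Rmult_comm Rmult_assoc Rinv_l; lra.
have hFrk : Fr <= (1 + eta / 2) * Fk.
  have : INR T * Fr <= INR T * ((1 + eta / 2) * Fk) by nra.
  move=> h; apply: (Rmult_le_reg_l (INR T)) => //.
have hq : Fr * pK < (1 + eta) * Fn.
  have : (1 + eta / 2) * Fk * pK <= (1 + eta / 2) * Fn by nra.
  nra.
have hl : H / (Cn * pm) <= Fr / pm.
  rewrite /Rdiv Rinv_mult.
  have hiC : 0 < / Cn by apply: Rinv_0_lt_compat.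
  have hip : 0 < / pm by apply: Rinv_0_lt_compat.
  have : H * / Cn <= Fr.
    have := Rmult_le_compat_r (/ Cn) _ _ (Rlt_le _ _ hiC) hhitR.
    by rewrite (Rmult_comm Cn) Rmult_assoc Rinv_r ?Rmult_1_r; lra.
  nra.
apply: (Rle_lt_trans _ _ _ hl).
have hip : 0 < / pm by apply: Rinv_0_lt_compat.
have hiK : 0 < / pK by apply: Rinv_0_lt_compat.
rewrite /Rdiv Rinv_mult.
have : Fr < (1 + eta) * Fn * / pK.
  have := Rmult_lt_compat_r (/ pK) _ _ hiK hq.
  by rewrite Rmult_assoc Rinv_r ?Rmult_1_r; lra.
nra.
Qed.
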